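(* Let $\lambda>0$, $L\ge1$, and let $\Sigma\in\mathbb{R}^{d\times d}$ be symmetric positive definite with simple spectrum $\sigma_1>\cdots>\sigma_d>0$ and unit eigenvectors $u_1,\dots,u_d$. Define, with $a=\mu^\top\Sigma\mu$ and $b=\mu^\top\Sigma^2\mu$, \[ \mathcal{R}_{\mathrm{lin},L}(\mu)=\operatorname{tr}(\Sigma)-\tfrac{2\lambda}{L}\operatorname{tr}(\Sigma)a-\tfrac{2\lambda(L+1)}{L}b+\tfrac{\lambda^2(L+2)}{L^2}\operatorname{tr}(\Sigma)a^2+\tfrac{\lambda^2(L+2)(L+3)}{L^2}ab. \] For $i=1,\dots,d$ let $\mu_i^\pm=\pm\gamma_i^\star u_i$ with $\gamma_i^\star=\sqrt{\frac{\operatorname{tr}(\Sigma)+(L+1)\sigma_i}{\frac{\lambda}{L}\sigma_i(L+2)(\operatorname{tr}(\Sigma)+(L+3)\sigma_i)}}$. Then $\mathrm{crit}(\mathcal{R}_{\mathrm{lin},L})=\{0\}\cup\{\mu_i^\pm:i=1,\dots,d\}$; $\nabla^2\mathcal{R}_{\mathrm{lin},L}(0)$ is negative definite, so $0$ is a local maximum; and $\nabla^2\mathcal{R}_{\mathrm{lin},L}(\mu_i^\pm)$ is diagonal in the eigenbasis of $\Sigma$, with eigenvalue along $u_j$ equal to $8\frac{\lambda}{L}\sigma_i(\operatorname{tr}(\Sigma)+(L+1)\sigma_i)$ if $j=i$, and $2\frac{\lambda}{L}\sigma_j(\sigma_i-\sigma_j)\frac{(L-1)\operatorname{tr}(\Sigma)+(L+1)(L+3)\sigma_i}{\operatorname{tr}(\Sigma)+(L+3)\sigma_i}$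 if $j\ne i$. In particular $\nabla^2\mathcal{R}_{\mathrm{lin},L}(\mu_1^\pm)$ is positive definite, and for $i>1$ $\nabla^2\mathcal{R}_{\mathrm{lin},L}(\mu_i^\pm)$ has both positive and negative eigenvalues. Consequently $\mu_1^\pm=\pm\gamma_1^\star u_1$ are global minimizers of $\mathcal{R}_{\mathrm{lin},L}$, and $\mu_i^\pm$ is a strict saddle for every $i>1$.
   Context: $\mathcal{R}_{\mathrm{lin},L}(\mu)$ equals $\mathbb{E}\|X_1-\frac{\lambda}{L}\sum_{k=1}^L(X_1^\top\mu\mu^\top X_k)X_k\|^2$ for $X_1,\dots,X_L$ i.i.d. $\mathcal{N}(0,\Sigma)$ (a linear attention risk). *)

(* Defs.v *)
From HB Require Import structures.
From mathcomp Require Import all_boot all_order all_algebra.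
From mathcomp Require Import all_classical all_reals all_analysis.
Set Implicit Arguments. Unset Strict Implicit. Unset Printing Implicit Defensive.
Import Order.TTheory GRing.Theory Num.Theory.
Import numFieldNormedType.Exports.
Local Open Scope classical_set_scope.
Local Open Scope ring_scope.

Section Defs.
Variables (R : realType) (d : nat).

Definition qf (A : 'M[R]_d) (v : 'cV[R]_d) : R := (v^T *m A *m v) 0 0.

Definition Rlin (Sigma : 'M[R]_d) (lam : R) (L : nat) (mu : 'cV[R]_d) : R :=
  let t := \tr Sigma in
  let a := qf Sigma mu in
  let b := qf (Sigma *m Sigma) mu in
  let L' := (L%:R : R) in
  t - (2 * lam / L') * t * a - (2 * lam * (L' + 1) / L') * b
    + (lam ^+ 2 * (L' + 2) / L' ^+ 2) * t * a ^+ 2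
    + (lam ^+ 2 * (L' + 2) * (L' + 3) / L' ^+ 2) * a * b.

Definition ev (j : 'I_d) : 'cV[R]_d := delta_mx j 0.

Definition crit (f : 'cV[R]_d -> R) : set 'cV[R]_d :=
  [set mu | differentiable f mu /\ forall v, 'd f mu v = 0].

Definition hessian (f : 'cV[R]_d -> R) (mu : 'cV[R]_d) : 'M[R]_d :=
  \matrix_(i, j) derive (fun x => derive f x (ev j)) mu (ev i).

Definition posdef (A : 'M[R]_d) := forall v : 'cV[R]_d, v != 0 -> 0 < qf A v.
Definition negdef (A : 'M[R]_d) := forall v : 'cV[R]_d, v != 0 -> qf A v < 0.

Definition local_max (f : 'cV[R]_d -> R) (mu : 'cV[R]_d) :=
  \forall x \near mu, f x <= f mu.

Definition global_min (f : 'cV[R]_d -> R) (mu : 'cV[R]_d) :=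
  forall x, f mu <= f x.

Definition strict_saddle (f : 'cV[R]_d -> R) (mu : 'cV[R]_d) :=
  crit f mu /\ exists a, eigenvalue (hessian f mu) a /\ a < 0.

End Defs.

(* Main.v *)
Require Import Defs.
From HB Require Import structures.
From mathcomp Require Import all_boot all_order all_algebra.
From mathcomp Require Import all_classical all_reals all_analysis.
From mathcomp Require Import ring lra.
Import Order.TTheory GRing.Theory Num.Theory.
Import numFieldNormedType.Exports.
Local Open Scope classical_set_scope.
Local Open Scope ring_scope.
Set Implicit Arguments. Unset Strict Implicit. Unset Printing Implicit Defensive.

Section Quad.
Variables (R : realType) (V : normedModType R).

Lemma is_derive_quad (f : V -> R) x v c1 c2 :
  (forall h : R, f (h *: v + x) = f x + h * c1 + h ^+ 2 * c2) -> is_derive x v f c1.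
Proof.
move=> E.
have C : (fun h : R => h^-1 *: ((f \o shift x) (h *: v) - f x)) @ (0:R)^' --> c1.
  have C0 : (fun h : R => c1 + h * c2) @ (0:R)^' --> c1.
    have : (fun h : R => c1 + h * c2) @ (0:R)^' --> c1 + 0 * c2.
      apply: cvgD; first exact: cvg_cst.
      apply: cvgMr_tmp.
    by apply: cvg_trans (cvg_within _); exact: cvg_id.
    by rewrite mul0r addr0.
  apply: cvg_trans C0; apply: near_eq_cvg; near=> h.
  rewrite /= E /=.
  have hn : h != 0 by near: h; exact: nbhs_dnbhs_neq.
  rewrite /GRing.scale /=. field. done.
apply: DeriveDef; first by apply/cvg_ex; exists c1.
exact: cvg_lim.
Unshelve. all: by end_near.
Qed.

Lemma is_derive_cst' (k : R) x v : is_derive x v (fun _ : V => k) 0.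
Proof. exact: is_derive_cst. Qed.

Lemma is_deriveD' (F G : V -> R) x v dF dG :
  is_derive x v F dF -> is_derive x v G dG ->
  is_derive x v (fun y => F y + G y) (dF + dG).
Proof. move=> h1 h2; exact: is_deriveD. Qed.

Lemma is_deriveB' (F G : V -> R) x v dF dG :
  is_derive x v F dF -> is_derive x v G dG ->
  is_derive x v (fun y => F y - G y) (dF - dG).
Proof. move=> h1 h2; exact: is_deriveB. Qed.

Lemma is_deriveN' (F : V -> R) x v dF :
  is_derive x v F dF -> is_derive x v (fun y => - F y) (- dF).
Proof. move=> h1; exact: is_deriveN. Qed.

Lemma differentiableN' (F : V -> R) x :
  differentiable F x -> differentiable (fun y => - F y) x.
Proof. move=> h1; exact: differentiableN. Qed.

Lemma is_deriveM' (F G : V -> R) x v dF dG :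
  is_derive x v F dF -> is_derive x v G dG ->
  is_derive x v (fun y => F y * G y) (F x * dG + G x * dF).
Proof. move=> h1 h2; exact: is_deriveM. Qed.

Lemma is_deriveX2' (F : V -> R) x v dF :
  is_derive x v F dF -> is_derive x v (fun y => F y ^+ 2) (2 * F x * dF).
Proof.
move=> h1; have := @is_deriveX _ _ F 2 x v dF h1.
by rewrite expr1.
Qed.

Lemma differentiableM' (F G : V -> R) x :
  differentiable F x -> differentiable G x -> differentiable (fun y => F y * G y) x.
Proof. move=> h1 h2; exact: differentiableM. Qed.
Lemma differentiableD' (F G : V -> R) x :
  differentiable F x -> differentiable G x -> differentiable (fun y => F y + G y) x.
Proof. move=> h1 h2; exact: differentiableD. Qed.
Lemma differentiableB' (F G : V -> R) x :
  differentiable F x -> differentiable G x -> differentiable (fun y => F y - G y) x.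
Proof. move=> h1 h2; exact: differentiableB. Qed.
Lemma differentiableX2' (F : V -> R) x :
  differentiable F x -> differentiable (fun y => F y ^+ 2) x.
Proof.
move=> h1; have -> : (fun y => F y ^+ 2) = (fun y => F y * F y).
  by apply/funext => y; rewrite expr2.
exact: differentiableM'.
Qed.
Lemma differentiable_cst' (k : R) x : differentiable (fun _ : V => k) x.
Proof. exact: differentiable_cst. Qed.
End Quad.

Section Mx.
Variables (R : realType) (d : nat).
Implicit Types (A : 'M[R]_d) (x y v w : 'cV[R]_d).

Definition bl A x y : R := (x^T *m A *m y) 0 0.

Lemma bl_expand A x v (h : R) :
  qf A (h *: v + x) = qf A x + h * (bl A x v + bl A v x) + h ^+ 2 * qf A v.
Proof.
rewrite /qf /bl !linearD /= !linearZ /= !mulmxDl -!scalemxAl.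
rewrite !mxE. ring.
Qed.

Lemma is_derive_qf A x v : is_derive x v (qf A) (bl A x v + bl A v x).
Proof. apply: (@is_derive_quad _ _ _ _ _ _ (qf A v)) => h; exact: bl_expand. Qed.

Lemma is_derive_bll A w x v : is_derive x v (fun y => bl A y w) (bl A v w).
Proof.
apply: (@is_derive_quad _ _ _ _ _ _ 0) => h.
rewrite /bl !linearD /= !linearZ /= !mulmxDl -!scalemxAl !mxE; ring.
Qed.

Lemma differentiable_qf A x : differentiable (qf A) x.
Proof.
have -> : qf A = \sum_(l < d) \sum_(k < d) (fun y : 'cV[R]_d => (y k 0 * A k l) * y l 0).
  apply/funext => y; rewrite fct_sumE /qf mxE; apply: eq_bigr => l _.
  rewrite fct_sumE mxE mulr_suml; apply: eq_bigr => k _; by rewrite !mxE.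
apply: differentiable_sum => l; apply: differentiable_sum => k.
apply: differentiableM'; last exact: differentiable_coord.
apply: differentiableM'; first exact: differentiable_coord.
exact: differentiable_cst'.
Qed.

End Mx.
Section Mx2.
Variables (R : realType) (d : nat).
Implicit Types (A : 'M[R]_d) (x y v w : 'cV[R]_d).

Definition ip x y : R := (x^T *m y) 0 0.

Lemma ipC x y : ip x y = ip y x.
Proof.
rewrite /ip; have -> : (x^T *m y) 0 0 = ((x^T *m y)^T) 0 0 by rewrite [RHS]mxE.
by rewrite trmx_mul trmxK.
Qed.

Lemma bl_sym A x y : A^T = A -> bl A y x = bl A x y.
Proof.
move=> hA; rewrite /bl; have -> : (y^T *m A *m x) 0 0 = ((y^T *m A *m x)^T) 0 0 by rewrite [RHS]mxE.
by rewrite !trmx_mul trmxK hA mulmxA.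
Qed.

Lemma ip_sum x I r (P : pred I) (F : I -> 'cV[R]_d) :
  ip x (\sum_(i <- r | P i) F i) = \sum_(i <- r | P i) ip x (F i).
Proof. by rewrite /ip mulmx_sumr summxE. Qed.

Lemma ipZr x y (c : R) : ip x (c *: y) = c * ip x y.
Proof. by rewrite /ip -scalemxAr mxE. Qed.
Lemma ipZl x y (c : R) : ip (c *: x) y = c * ip x y.
Proof. by rewrite ipC ipZr ipC. Qed.
Lemma ipDr x y z : ip x (y + z) = ip x y + ip x z.
Proof. by rewrite /ip mulmxDr mxE. Qed.

Lemma qf_ip A x : qf A x = ip x (A *m x).
Proof. by rewrite /qf /ip mulmxA. Qed.

Lemma bl_ip A x y : bl A x y = ip x (A *m y).
Proof. by rewrite /bl /ip mulmxA. Qed.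

Lemma bl_ipl A x y : A^T = A -> bl A x y = ip (A *m x) y.
Proof. by move=> hA; rewrite /bl /ip trmx_mul hA. Qed.

Lemma bl_ev A x j : A^T = A -> bl A x (ev R j) = (A *m x) j 0.
Proof.
move=> hA; rewrite bl_ipl // /ip /ev -colE mxE.
by rewrite mxE.
Qed.

Lemma bl_evev A i j : bl A (ev R i) (ev R j) = A i j.
Proof. by rewrite /bl /ev trmx_delta -rowE -colE !mxE. Qed.

Lemma outer_mul x y z : (x *m y^T) *m z = ip y z *: x.
Proof. by rewrite -mulmxA [y^T *m z]mx11_scalar mul_mx_scalar. Qed.

Lemma outer_entry x y i j : (x *m y^T) i j = x i 0 * y j 0.
Proof. by rewrite mxE big_ord1 mxE. Qed.

Lemma mxDE (A B : 'M[R]_d) i j : (A + B) i j = A i j + B i j.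
Proof. by rewrite mxE. Qed.
Lemma mxZE (A : 'M[R]_d) (c : R) i j : (c *: A) i j = c * A i j.
Proof. by rewrite mxE. Qed.
End Mx2.

Ltac neq0 := repeat (apply/andP; split); apply: lt0r_neq0; nra.
Section Scalar.
Variable R : realFieldType.

Definition Fab (t lam Lr a b : R) :=
  t - 2 * lam / Lr * t * a - 2 * lam * (Lr + 1) / Lr * b
    + lam ^+ 2 * (Lr + 2) / Lr ^+ 2 * t * a ^+ 2
    + lam ^+ 2 * (Lr + 2) * (Lr + 3) / Lr ^+ 2 * a * b.

Definition hfun (t Lr r : R) := (t + (Lr + 1) * r) ^+ 2 / ((Lr + 2) * (t + (Lr + 3) * r)).

Lemma Fab_lb (t lam Lr a r : R) : 0 < t -> 0 <= r -> 0 < lam -> 1 <= Lr ->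
  t - hfun t Lr r <= Fab t lam Lr a (r * a).
Proof.
move=> ht hr hl hL.
have hD : 0 < t + (Lr + 3) * r by nra.
have E : Fab t lam Lr a (r * a) - (t - hfun t Lr r) =
   (lam / Lr * (Lr + 2) * (t + (Lr + 3) * r) * a - (t + (Lr + 1) * r)) ^+ 2
     / ((Lr + 2) * (t + (Lr + 3) * r)).
  rewrite /Fab /hfun; field.
  neq0.
rewrite -subr_ge0 E; apply: divr_ge0; first exact: sqr_ge0.
apply: mulr_ge0; lra.
Qed.

Lemma hfun_mono (t Lr r s : R) : 0 < t -> 0 <= r -> r <= s -> 1 <= Lr ->
  hfun t Lr r <= hfun t Lr s.
Proof.
move=> ht hr hrs hL.
have hDr : 0 < t + (Lr + 3) * r by nra.
have hDs : 0 < t + (Lr + 3) * s by nra.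
have E : hfun t Lr s - hfun t Lr r = (s - r) *
   (t ^+ 2 * (Lr - 1) + t * (Lr + 1) ^+ 2 * (s + r) + (Lr + 1) ^+ 2 * (Lr + 3) * s * r)
   / ((Lr + 2) * (t + (Lr + 3) * r) * (t + (Lr + 3) * s)).
  rewrite /hfun; field.
  neq0.
rewrite -subr_ge0 E; apply: divr_ge0.
  apply: mulr_ge0; first lra.
  apply: addr_ge0; [apply: addr_ge0|].
  - apply: mulr_ge0; [exact: sqr_ge0|lra].
  - apply: mulr_ge0; [apply: mulr_ge0; [lra|exact: sqr_ge0]|lra].
  - apply: mulr_ge0; [apply: mulr_ge0; [apply: mulr_ge0; [exact: sqr_ge0|lra]|lra]|lra].
apply: mulr_ge0; [apply: mulr_ge0|]; lra.
Qed.

Definition gfun (t lam Lr s : R) :=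
  (t + (Lr + 1) * s) / (lam / Lr * s * (Lr + 2) * (t + (Lr + 3) * s)).

Lemma glob_scalar (t lam Lr s a b : R) : 0 < t -> 0 < s -> 0 < lam -> 1 <= Lr ->
  0 <= a -> 0 <= b -> b <= s * a ->
  Fab t lam Lr (gfun t lam Lr s * s) (gfun t lam Lr s * s ^+ 2) <= Fab t lam Lr a b.
Proof.
move=> ht hs hl hL ha hb hba.
have hD : 0 < t + (Lr + 3) * s by nra.
have Emin : Fab t lam Lr (gfun t lam Lr s * s) (gfun t lam Lr s * s ^+ 2) = t - hfun t Lr s.
  rewrite /Fab /hfun /gfun; field.
  neq0.
rewrite Emin.
have [a0|apos] := eqVneq a 0.
  have b0 : b = 0 by subst a; lra.
  subst a b; rewrite /Fab /hfun.
  have : 0 <= (t + (Lr + 1) * s) ^+ 2 / ((Lr + 2) * (t + (Lr + 3) * s)).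
    by apply: divr_ge0; [exact: sqr_ge0| apply: mulr_ge0; lra].
  set z := (_ / _); move=> hz.
  have -> : t - 2 * lam / Lr * t * 0 - 2 * lam * (Lr + 1) / Lr * 0 +
    lam ^+ 2 * (Lr + 2) / Lr ^+ 2 * t * 0 ^+ 2 +
    lam ^+ 2 * (Lr + 2) * (Lr + 3) / Lr ^+ 2 * 0 * 0 = t by ring.
  lra.
have ha' : 0 < a by rewrite lt_neqAle eq_sym apos.
have -> : b = (b / a) * a by rewrite mulfVK.
have hr : 0 <= b / a by apply: divr_ge0.
have hrs : b / a <= s by rewrite ler_pdivrMr.
apply: le_trans (@Fab_lb t lam Lr a (b / a) ht hr hl hL).
have := @hfun_mono t Lr (b / a) s ht hr hrs hL; lra.
Qed.
End Scalar.
Section Main.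
Variables (R : realType) (d L : nat) (lam : R)
    (Sigma : 'M[R]_d) (sigma : 'I_d -> R) (u : 'I_d -> 'cV[R]_d).
Hypotheses (hlam : 0 < lam) (hL : (1 <= L)%N) (hsym : Sigma^T = Sigma)
  (hpd : posdef Sigma)
  (hdist : forall i j : 'I_d, (i < j)%N -> sigma j < sigma i)
  (hpos : forall i, 0 < sigma i)
  (heig : forall i, Sigma *m u i = sigma i *: u i)
  (hunit : forall i, (u i)^T *m u i = 1).

Lemma sym2 : (Sigma *m Sigma)^T = Sigma *m Sigma.
Proof. by rewrite trmx_mul hsym. Qed.

Lemma heig2 i : Sigma *m Sigma *m u i = (sigma i ^+ 2) *: u i.
Proof. by rewrite -mulmxA heig -scalemxAr heig scalerA expr2. Qed.

Lemma sigma_inj i j : i != j -> sigma i != sigma j.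
Proof.
move=> hij; case: (ltngtP i j) => h.
- by rewrite gt_eqF // hdist.
- by rewrite lt_eqF // hdist.
- by move: hij; rewrite (val_inj h) eqxx.
Qed.

Lemma ip_uu i j : ip (u i) (u j) = (i == j)%:R.
Proof.
case: (eqVneq i j) => [<-|hij].
  by rewrite /ip hunit mxE eqxx.
have e1 : ip (u i) (Sigma *m u j) = sigma j * ip (u i) (u j) by rewrite heig ipZr.
have e2 : ip (u i) (Sigma *m u j) = sigma i * ip (u i) (u j).
  by rewrite -bl_ip bl_ipl // heig ipZl.
have : (sigma i - sigma j) * ip (u i) (u j) = 0 by rewrite mulrBl -e1 -e2 subrr.
move/eqP; rewrite mulf_eq0 subr_eq0 (negbTE (sigma_inj hij)) /= => /eqP ->.
by [].
Qed.

Definition Um : 'M[R]_d := \matrix_(k, j) u j k 0.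

Lemma UtU : Um^T *m Um = 1%:M.
Proof.
apply/matrixP => i j; rewrite !mxE -ip_uu /ip mxE.
by apply: eq_bigr => k _; rewrite !mxE.
Qed.

Lemma expand x : x = \sum_j ip (u j) x *: u j.
Proof.
have h := mulmx1C UtU.
rewrite -[LHS]mul1mx -h -mulmxA.
apply/matrixP => k l; rewrite mxE summxE; apply: eq_bigr => j _.
rewrite !mxE /ip mxE (ord1 l) mulrC; congr (_ * _).
by apply: eq_bigr => m _; rewrite !mxE.
Qed.

Lemma qf_spec (A : 'M[R]_d) (lv : 'I_d -> R) x :
  (forall j, A *m u j = lv j *: u j) ->
  qf A x = \sum_j lv j * ip (u j) x ^+ 2.
Proof.
move=> hA; rewrite qf_ip. rewrite [in X in ip _ (_ *m X)](expand x). rewrite mulmx_sumr ip_sum; apply: eq_bigr => j _.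
rewrite -scalemxAr hA scalerA ipZr [ip x _]ipC; ring.
Qed.

Lemma ip_expand_neq0 x : x != 0 -> exists j, ip (u j) x != 0.
Proof.
move=> hx; apply/existsP; apply: contraNT hx; rewrite negb_exists => /forallP h.
rewrite [x]expand big1 // => j _.
by move: (h j); rewrite negbK => /eqP ->; rewrite scale0r.
Qed.

Lemma bl_eig (A : 'M[R]_d) (q l : R) j v :
  A^T = A -> A *m u j = l *: u j -> bl A (q *: u j) v = q * l * ip (u j) v.
Proof.
move=> hA he; rewrite bl_ipl // -scalemxAr he scalerA ipZl.
by [].
Qed.

Lemma bl_eigr (A : 'M[R]_d) (l : R) j x :
  A *m u j = l *: u j -> bl A x (u j) = l * ip (u j) x.
Proof. by move=> he; rewrite bl_ip he ipZr ipC. Qed.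

Lemma tr_pos (i : 'I_d) : 0 < \tr Sigma.
Proof.
rewrite /mxtrace (bigD1 i) //= ltr_pwDl //.
  by rewrite -bl_evev; apply: hpd; apply/negP => /eqP/matrixP/(_ i 0); rewrite !mxE !eqxx /= => /eqP; rewrite oner_eq0.
apply: sumr_ge0 => k _; rewrite -bl_evev; apply: ltW; apply: hpd.
by apply/negP => /eqP/matrixP/(_ k 0); rewrite !mxE !eqxx /= => /eqP; rewrite oner_eq0.
Qed.


Definition tt := \tr Sigma.
Definition Lr : R := L%:R.
Definition k1 := lam ^+ 2 * (Lr + 2) / Lr ^+ 2.
Definition k2 := lam ^+ 2 * (Lr + 2) * (Lr + 3) / Lr ^+ 2.
Definition Pf y := - (2 * lam / Lr * tt) + 2 * k1 * tt * qf Sigma y + k2 * qf (Sigma *m Sigma) y.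
Definition Qf y := - (2 * lam * (Lr + 1) / Lr) + k2 * qf Sigma y.

Ltac dstep := lazymatch goal with
 | |- is_derive _ _ (fun _ => ?k) _ => eapply is_derive_cst'
 | |- is_derive _ _ (fun y => @?F y + @?G y) _ => eapply (is_deriveD' (F:=F) (G:=G))
 | |- is_derive _ _ (fun y => - @?F y) _ => eapply (is_deriveN' (F:=F))
 | |- is_derive _ _ (fun y => @?F y ^+ 2) _ => eapply (is_deriveX2' (F:=F))
 | |- is_derive _ _ (fun y => @?F y * @?G y) _ => eapply (is_deriveM' (F:=F) (G:=G))
 | |- is_derive _ _ (fun y => qf ?A y) _ => eapply (@is_derive_qf _ _ A)
 | |- is_derive _ _ (fun y => bl ?A y ?w) _ => eapply (@is_derive_bll _ _ A w)
 end.
Ltac dtac := repeat dstep.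

Lemma is_derive_f x v : is_derive x v (Rlin Sigma lam L)
  (2 * bl Sigma x v * Pf x + 2 * bl (Sigma *m Sigma) x v * Qf x).
Proof.
apply: is_derive_eq.
  rewrite /Rlin /=. dtac.
rewrite /= /Pf /Qf /k1 /k2 /tt /Lr (@bl_sym _ _ Sigma x v hsym) (@bl_sym _ _ _ x v sym2).
ring.
Qed.


Lemma diff_f x : differentiable (Rlin Sigma lam L) x.
Proof.
rewrite /Rlin /=.
repeat first [apply: differentiable_qf | apply: differentiable_cst' | apply: differentiableD'
  | apply: differentiableN' | apply: differentiableX2' | apply: differentiableM'].
Qed.

Lemma derive_f x v : derive (Rlin Sigma lam L) x v =
  2 * bl Sigma x v * Pf x + 2 * bl (Sigma *m Sigma) x v * Qf x.
Proof. by case: (is_derive_f x v). Qed.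

Definition Hm x := (2 * Pf x) *: Sigma + (2 * Qf x) *: (Sigma *m Sigma)
  + (8 * k1 * tt) *: ((Sigma *m x) *m (Sigma *m x)^T)
  + (4 * k2) *: ((Sigma *m x) *m (Sigma *m Sigma *m x)^T + (Sigma *m Sigma *m x) *m (Sigma *m x)^T).

Lemma hess x : hessian (Rlin Sigma lam L) x = Hm x.
Proof.
apply/matrixP => i j; rewrite /hessian mxE.
have -> : (fun y => derive (Rlin Sigma lam L) y (ev R j)) = (fun y => 2 * bl Sigma y (ev R j) * Pf y
    + 2 * bl (Sigma *m Sigma) y (ev R j) * Qf y).
  by apply/funext => y; rewrite derive_f.
suff: is_derive x (ev R i) (fun y => 2 * bl Sigma y (ev R j) * Pf y
    + 2 * bl (Sigma *m Sigma) y (ev R j) * Qf y) (Hm x i j) by case.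
apply: is_derive_eq.
  rewrite /Pf /Qf; dtac.
rewrite /= /Hm !mxDE !mxZE !outer_entry !bl_evev !(bl_ev _ _ hsym) !(bl_ev _ _ sym2).
rewrite (@bl_sym _ _ Sigma x (ev R i) hsym) (@bl_sym _ _ _ x (ev R i) sym2).
rewrite ?(bl_ev _ _ hsym) ?(bl_ev _ _ sym2) ?sym2 ?hsym ?mxDE ?outer_entry /Pf /Qf.
ring.
Qed.


Lemma Lr_gt0 : 0 < Lr.
Proof. by rewrite /Lr ltr0n. Qed.

Lemma Sx q i : Sigma *m (q *: u i) = (q * sigma i) *: u i.
Proof. by rewrite -scalemxAr heig scalerA. Qed.
Lemma SSx q i : Sigma *m Sigma *m (q *: u i) = (q * sigma i ^+ 2) *: u i.
Proof. by rewrite -scalemxAr heig2 scalerA. Qed.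

Lemma qf_mu q i : qf Sigma (q *: u i) = q ^+ 2 * sigma i.
Proof. by rewrite qf_ip Sx ipZl ipZr ip_uu eqxx /= mulr1; ring. Qed.
Lemma qf2_mu q i : qf (Sigma *m Sigma) (q *: u i) = q ^+ 2 * sigma i ^+ 2.
Proof. by rewrite qf_ip SSx ipZl ipZr ip_uu eqxx /= mulr1; ring. Qed.

Lemma Hm_u q i j : Hm (q *: u i) *m u j =
  (2 * Pf (q *: u i) * sigma j + 2 * Qf (q *: u i) * sigma j ^+ 2
   + (i == j)%:R * (8 * k1 * tt * (q * sigma i) ^+ 2 + 8 * k2 * q ^+ 2 * sigma i ^+ 3)) *: u j.
Proof.
rewrite /Hm !mulmxDl -!scalemxAl !mulmxDl !outer_mul heig heig2 Sx SSx !ipZl !ip_uu.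
case: (eqVneq i j) => [<-|hij]; rewrite ?mul0r ?scale0r ?addr0 ?mulr0 ?scale0r ?addr0 //=.
  rewrite !scalerA -!scalerDl !scalerA -!scalerDl; congr (_ *: _); ring.
by rewrite !scaler0 !addr0 !scalerA -scalerDl.
Qed.

Definition gam i := Num.sqrt ((tt + (Lr + 1) * sigma i) /
                 (lam / Lr * sigma i * (Lr + 2) * (tt + (Lr + 3) * sigma i))).

Lemma gam2 i : gam i ^+ 2 = (tt + (Lr + 1) * sigma i) /
                 (lam / Lr * sigma i * (Lr + 2) * (tt + (Lr + 3) * sigma i)).
Proof.
have ht := tr_pos i; have hs := hpos i; have hl := Lr_gt0.
rewrite /gam sqr_sqrtr // divr_ge0 //.
  rewrite /tt; apply: addr_ge0; [exact: ltW | apply: mulr_ge0; [lra|exact: ltW]].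
apply: ltW; apply: mulr_gt0; last by rewrite /tt; nra.
apply: mulr_gt0; last lra.
by apply: mulr_gt0 => //; apply: divr_gt0.
Qed.

Lemma crit_eq i q : q ^+ 2 = gam i ^+ 2 ->
  Pf (q *: u i) + sigma i * Qf (q *: u i) = 0.
Proof.
move=> hq; have ht := tr_pos i; have hs := hpos i; have hl := Lr_gt0.
rewrite /Pf /Qf qf_mu qf2_mu hq gam2 /k1 /k2.
have h1 : tt + (Lr + 3) * sigma i != 0 by rewrite /tt; apply/lt0r_neq0; nra.
have h2 : Lr != 0 by apply/lt0r_neq0.
have h3 : sigma i != 0 by apply/lt0r_neq0.
have h4 : lam != 0 by apply/lt0r_neq0.
have h5 : Lr + 2 != 0 by apply/lt0r_neq0; lra.
field; rewrite ?h1 ?h2 ?h3 ?h4 ?h5 //.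
Qed.


Lemma derive_f_u x j : derive (Rlin Sigma lam L) x (u j) =
  2 * sigma j * ip (u j) x * (Pf x + sigma j * Qf x).
Proof.
by rewrite derive_f (bl_eigr _ (heig j)) (bl_eigr _ (heig2 j)); ring.
Qed.

Definition lamH i j := if j == i then 8 * (lam / Lr) * sigma i * (tt + (Lr + 1) * sigma i)
  else 2 * (lam / Lr) * sigma j * (sigma i - sigma j) *
    (((Lr - 1) * tt + (Lr + 1) * (Lr + 3) * sigma i) / (tt + (Lr + 3) * sigma i)).

Lemma hess_u i j q : q ^+ 2 = gam i ^+ 2 -> Hm (q *: u i) *m u j = lamH i j *: u j.
Proof.
move=> hq; rewrite Hm_u /lamH; congr (_ *: _).
have ht := tr_pos i; have hs := hpos i; have hl := Lr_gt0.
have h1 : tt + (Lr + 3) * sigma i != 0 by rewrite /tt; apply/lt0r_neq0; nra.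
have h2 : Lr != 0 by apply/lt0r_neq0.
have h3 : sigma i != 0 by apply/lt0r_neq0.
have h4 : lam != 0 by apply/lt0r_neq0.
have h5 : Lr + 2 != 0 by apply/lt0r_neq0; lra.
case: (eqVneq j i) => [->|hji]; rewrite ?eqxx /= ?mulr1.
  rewrite /Pf /Qf qf_mu qf2_mu exprMn hq gam2 /k1 /k2.
  field; rewrite ?h1 ?h2 ?h3 ?h4 ?h5 //.
rewrite mul0r addr0.
rewrite /Pf /Qf qf_mu qf2_mu hq gam2 /k1 /k2.
field; rewrite ?h1 ?h2 ?h3 ?h4 ?h5 //.
Qed.

Lemma Hm_sym x : (Hm x)^T = Hm x.
Proof.
rewrite /Hm !linearD /= !linearZ /= hsym sym2 !trmx_mul !trmxK.
by rewrite [X in _ + X = _]addrC.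
Qed.

Lemma bl0 (A : 'M[R]_d) v : bl A 0 v = 0.
Proof. by rewrite /bl trmx0 !mul0mx mxE. Qed.
Lemma qf0 (A : 'M[R]_d) : qf A 0 = 0.
Proof. by rewrite /qf trmx0 !mul0mx mxE. Qed.


Lemma sum_pos (F : 'I_d -> R) i : (forall j, 0 <= F j) -> 0 < F i -> 0 < \sum_j F j.
Proof.
move=> h0 hi; rewrite (bigD1 i) //=.
have : 0 <= \sum_(j | j != i) F j by apply: sumr_ge0.
lra.
Qed.

Lemma hq_sign i (s : bool) : ((-1) ^+ s * gam i) ^+ 2 = gam i ^+ 2.
Proof. by rewrite exprMn sqrr_sign mul1r. Qed.

Lemma crit_mu i (s : bool) : crit (Rlin Sigma lam L) (((-1) ^+ s * gam i) *: u i).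
Proof.
split; first exact: diff_f.
move=> v; rewrite -deriveE; last exact: diff_f.
rewrite derive_f (bl_eig _ _ hsym (heig i)) (bl_eig _ _ sym2 (heig2 i)).
have := crit_eq (hq_sign i s).
set P := Pf _; set Q := Qf _; set q := _ * gam i => E.
have -> : 2 * (q * sigma i * ip (u i) v) * P + 2 * (q * sigma i ^+ 2 * ip (u i) v) * Q =
  2 * q * sigma i * ip (u i) v * (P + sigma i * Q) by ring.
by rewrite E mulr0.
Qed.

Lemma crit_0 : crit (Rlin Sigma lam L) 0.
Proof.
split; first exact: diff_f.
move=> v; rewrite -deriveE; last exact: diff_f.
by rewrite derive_f !bl0 !mulr0 !mul0r addr0.
Qed.

Lemma crit_inv x : crit (Rlin Sigma lam L) x ->
  x = 0 \/ exists i (s : bool), x = ((-1) ^+ s * gam i) *: u i.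
Proof.
case=> _ hd.
have hj : forall j, ip (u j) x * (Pf x + sigma j * Qf x) = 0.
  move=> j; move: (hd (u j)); rewrite -deriveE; last exact: diff_f.
  rewrite derive_f_u.
  have h2s : 2 * sigma j != 0 by apply/lt0r_neq0; have := hpos j; lra.
  rewrite -(mulrA (2 * sigma j)) => /eqP; rewrite mulf_eq0 (negbTE h2s) /=.
  by move/eqP.
have hE : forall j, ip (u j) x != 0 -> Pf x + sigma j * Qf x = 0.
  by move=> j hn; move: (hj j) => /eqP; rewrite mulf_eq0 (negbTE hn) /= => /eqP.
case: (eqVneq x 0) => [->|hx]; [by left | right].
have [i hi] := ip_expand_neq0 hx.
have ht := tr_pos i; have hl := Lr_gt0.
have Ei := hE i hi.
have others : forall k, k != i -> ip (u k) x = 0.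
  move=> k hk; apply/eqP; apply: contraT => hpk.
  have Ek := hE k hpk.
  have hQ : Qf x = 0.
    have : (sigma i - sigma k) * Qf x = 0.
      by rewrite mulrBl; apply/eqP; rewrite subr_eq0 -(can_eq (addKr (Pf x))) Ei Ek.
    move/eqP; rewrite mulf_eq0 subr_eq0 eq_sym (negbTE (sigma_inj hk)) /=.
    by move/eqP.
  have hP : Pf x = 0 by move: Ei; rewrite hQ mulr0 addr0.
  have hb : 0 < qf (Sigma *m Sigma) x.
    rewrite (qf_spec x heig2); apply: (sum_pos (i := i)).
      by move=> j; apply: mulr_ge0; apply: sqr_ge0.
    apply: mulr_gt0; first by have := hpos i; nra.
    by rewrite lt_def sqr_ge0 andbT sqrf_eq0.
  have hk2 : 0 < k2.
    rewrite /k2; apply: divr_gt0; last by apply: exprn_gt0.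
    apply: mulr_gt0; [apply: mulr_gt0; [by apply: exprn_gt0|lra]|lra].
  have ha : qf Sigma x = 2 * lam * (Lr + 1) / Lr / k2.
    move: hQ; rewrite /Qf => hQ.
    have hk2n : k2 != 0 by apply/lt0r_neq0.
    apply: (mulfI hk2n); rewrite mulrCA mulfV // mulr1 [RHS]mulrC; lra.
  have : Pf x = tt * (2 * lam / Lr) * (Lr - 1) / (Lr + 3) + k2 * qf (Sigma *m Sigma) x.
    rewrite /Pf ha /k1 /k2.
    have h2 : Lr != 0 by apply/lt0r_neq0.
    have h4 : lam != 0 by apply/lt0r_neq0.
    have h5 : Lr + 2 != 0 by apply/lt0r_neq0; lra.
    have h6 : Lr + 3 != 0 by apply/lt0r_neq0; lra.
    field; rewrite ?h2 ?h4 ?h5 ?h6 //.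
  rewrite hP => E.
  have hL1 : 1 <= Lr by rewrite /Lr ler1n.
  have : 0 <= tt * (2 * lam / Lr) * (Lr - 1) / (Lr + 3).
    apply: divr_ge0; last lra.
    apply: mulr_ge0; last lra.
    apply: mulr_ge0; first lra.
    apply: divr_ge0; last exact: ltW.
    by apply: mulr_ge0 => //; apply: ltW.
  have : 0 < k2 * qf (Sigma *m Sigma) x by apply: mulr_gt0.
  lra.
set q := ip (u i) x.
have hx' : x = q *: u i.
  rewrite {1}[x]expand (bigD1 i) //= big1 ?addr0 // => k hk.
  by rewrite others // scale0r.
have hq : q ^+ 2 = gam i ^+ 2.
  have hs := hpos i.
  have F : Pf (q *: u i) + sigma i * Qf (q *: u i) =
      2 * sigma i * (k1 * tt + k2 * sigma i) * (q ^+ 2 - gam i ^+ 2).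
    rewrite /Pf /Qf qf_mu qf2_mu gam2 /k1 /k2.
    have h1 : tt + (Lr + 3) * sigma i != 0 by rewrite /tt; apply/lt0r_neq0; nra.
    have h2 : Lr != 0 by apply/lt0r_neq0.
    have h3 : sigma i != 0 by apply/lt0r_neq0.
    have h4 : lam != 0 by apply/lt0r_neq0.
    have h5 : Lr + 2 != 0 by apply/lt0r_neq0; lra.
    field; rewrite ?h1 ?h2 ?h3 ?h4 ?h5 //.
  move: Ei; rewrite hx' F => /eqP; rewrite mulf_eq0 subr_eq0 => /orP [|/eqP //].
  have hk : 0 < 2 * sigma i * (k1 * tt + k2 * sigma i).
    apply: mulr_gt0; first lra.
    have hk1 : 0 < k1.
      rewrite /k1; apply: divr_gt0; last by apply: exprn_gt0.
      apply: mulr_gt0; [by apply: exprn_gt0|lra].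
    have hk2 : 0 < k2.
      rewrite /k2; apply: divr_gt0; last by apply: exprn_gt0.
      apply: mulr_gt0; [apply: mulr_gt0; [by apply: exprn_gt0|lra]|lra].
    nra.
  by rewrite (negbTE (lt0r_neq0 hk)).
exists i; move: hq => /eqP; rewrite eqf_sqr => /orP [/eqP hq|/eqP hq].
  by exists false; rewrite hx' hq expr0 mul1r.
by exists true; rewrite hx' hq expr1 mulN1r.
Qed.


Lemma k1_gt0 : 0 < k1.
Proof.
have hl := Lr_gt0.
rewrite /k1; apply: divr_gt0; last by apply: exprn_gt0.
apply: mulr_gt0; [by apply: exprn_gt0|lra].
Qed.
Lemma k2_gt0 : 0 < k2.
Proof.
have hl := Lr_gt0.
rewrite /k2; apply: divr_gt0; last by apply: exprn_gt0.
apply: mulr_gt0; [apply: mulr_gt0; [by apply: exprn_gt0|lra]|lra].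
Qed.
Lemma Lr_ge1 : 1 <= Lr.
Proof. by rewrite /Lr ler1n. Qed.

Lemma qf_lin (a b : R) (A B : 'M[R]_d) v : qf (a *: A + b *: B) v = a * qf A v + b * qf B v.
Proof. by rewrite !qf_ip mulmxDl -!scalemxAl ipDr !ipZr. Qed.

Lemma Hm0 : Hm 0 = (2 * Pf 0) *: Sigma + (2 * Qf 0) *: (Sigma *m Sigma).
Proof. by rewrite /Hm !mulmx0 trmx0 ?mulmx0 ?mul0mx ?scaler0 ?addr0 ?scaler0 ?addr0. Qed.

Lemma a_ge0 x : 0 <= qf Sigma x.
Proof.
rewrite (qf_spec x heig); apply: sumr_ge0 => j _.
by apply: mulr_ge0; [exact: ltW | exact: sqr_ge0].
Qed.
Lemma b_ge0 x : 0 <= qf (Sigma *m Sigma) x.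
Proof.
rewrite (qf_spec x heig2); apply: sumr_ge0 => j _.
by apply: mulr_ge0; exact: sqr_ge0.
Qed.

Lemma negdef0 : negdef (hessian (Rlin Sigma lam L) 0).
Proof.
move=> v hv; have hlam' := hlam; rewrite hess Hm0 qf_lin /Pf /Qf !qf0 !mulr0 !addr0.
have [j _] := ip_expand_neq0 hv.
have ht := tr_pos j; have hl := Lr_gt0.
have ha : 0 < qf Sigma v := hpd hv.
have hb := b_ge0 v.
have c1 : 0 < 2 * lam / Lr * tt by apply: mulr_gt0 => //; apply: divr_gt0 => //; lra.
have c2 : 0 < 2 * lam * (Lr + 1) / Lr by apply: divr_gt0 => //; apply: mulr_gt0; lra.
nra.
Qed.

Lemma Rlin_Fab y : Rlin Sigma lam L y = Fab tt lam Lr (qf Sigma y) (qf (Sigma *m Sigma) y).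
Proof. by []. Qed.

Lemma localmax0 : local_max (Rlin Sigma lam L) 0.
Proof.
rewrite /local_max; have hlam' := hlam.
have hc := differentiable_continuous (differentiable_qf Sigma (0 : 'cV[R]_d)).
have hl := Lr_gt0; have hk1 := k1_gt0; have hk2 := k2_gt0.
have heps : 0 < 2 * lam / Lr / k2 by apply: divr_gt0 => //; apply: divr_gt0 => //; lra.
have := cvgr_dist_lt _ _ hc _ heps.
move=> H; near=> x.
have hx : `|qf Sigma 0 - qf Sigma x| < 2 * lam / Lr / k2 by near: x; exact: H.
rewrite !Rlin_Fab !qf0.
move: hx; rewrite qf0 sub0r normrN.
have ha := a_ge0 x; have hb := b_ge0 x.
set a := qf Sigma x; set b := qf _ x.
rewrite ger0_norm // => hx.
have e2 : k2 * a <= 2 * lam / Lr.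
  by rewrite mulrC -ler_pdivlMr //; apply: ltW.
have k12 : k1 <= k2.
  rewrite /k1 /k2 ler_pdivrMr; last by apply: exprn_gt0.
  rewrite divfK; last by apply/lt0r_neq0; apply: exprn_gt0.
  have : 0 < lam ^+ 2 * (Lr + 2) by apply: mulr_gt0; [apply: exprn_gt0|lra].
  nra.
have e1 : k1 * a <= 2 * lam / Lr.
  apply: le_trans e2; exact: ler_wpM2r.
have e3 : 2 * lam / Lr <= 2 * lam * (Lr + 1) / Lr.
  rewrite ler_pdivrMr // divfK; last exact: lt0r_neq0.
  nra.
have ht : 0 <= tt.
  rewrite /tt /mxtrace; apply: sumr_ge0 => k _; rewrite -bl_evev; exact: a_ge0.
have p1 : tt * a * (k1 * a - 2 * lam / Lr) <= 0.
  by apply: mulr_ge0_le0; [apply: mulr_ge0 | rewrite subr_le0].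
have p2 : b * (k2 * a - 2 * lam * (Lr + 1) / Lr) <= 0.
  by apply: mulr_ge0_le0 => //; rewrite subr_le0; apply: le_trans e3.
rewrite /Fab -/k1 -/k2.
have -> : tt - 2 * lam / Lr * tt * 0 - 2 * lam * (Lr + 1) / Lr * 0 + k1 * tt * 0 ^+ 2 + k2 * 0 * 0 = tt by ring.
have E : tt - 2 * lam / Lr * tt * a - 2 * lam * (Lr + 1) / Lr * b + k1 * tt * a ^+ 2 + k2 * a * b
  = tt + tt * a * (k1 * a - 2 * lam / Lr) + b * (k2 * a - 2 * lam * (Lr + 1) / Lr) by ring.
rewrite E; lra.
Unshelve. all: by end_near.
Qed.


Lemma Dpos (c : R) i : 0 <= c -> 0 < tt + c * sigma i.
Proof.
move=> hc; have := tr_pos i; have := mulr_ge0 hc (ltW (hpos i)); rewrite /tt; lra.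
Qed.

Lemma eig_of i j (q : R) : q ^+ 2 = gam i ^+ 2 ->
  eigenvalue (hessian (Rlin Sigma lam L) (q *: u i)) (lamH i j).
Proof.
move=> hq; apply/eigenvalueP; exists (u j)^T.
  by rewrite hess -[(u j)^T *m _]trmxK trmx_mul trmxK Hm_sym hess_u // linearZ.
apply/eqP => h; have := hunit j; rewrite h mul0mx => /eqP.
by rewrite eq_sym oner_eq0.
Qed.

Lemma lamH_ii i : 0 < lamH i i.
Proof.
have ht := tr_pos i; have hs := hpos i; have hl := Lr_gt0; have hlam' := hlam.
rewrite /lamH eqxx.
apply: mulr_gt0; last by apply: Dpos; lra.
apply: mulr_gt0 => //; apply: mulr_gt0 => //; by apply: divr_gt0.
Qed.

Lemma lamH_sign i j : j != i -> (0 < lamH i j) = (sigma j < sigma i).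
Proof.
move=> hji.
have ht := tr_pos i; have hs := hpos i; have hsj := hpos j; have hl := Lr_gt0.
have hlam' := hlam; have hL1 := Lr_ge1.
rewrite /lamH (negbTE hji).
have hc : 0 < 2 * (lam / Lr) * sigma j by apply: mulr_gt0 => //; apply: mulr_gt0 => //; apply: divr_gt0.
have hf : 0 < ((Lr - 1) * tt + (Lr + 1) * (Lr + 3) * sigma i) / (tt + (Lr + 3) * sigma i).
  apply: divr_gt0; last by apply: Dpos; lra.
  have : 0 <= (Lr - 1) * tt by apply: mulr_ge0; lra.
  have : 0 < (Lr + 1) * (Lr + 3) * sigma i by apply: mulr_gt0 => //; apply: mulr_gt0; lra.
  lra.
rewrite -mulrA (pmulr_rgt0 _ hc) (pmulr_lgt0 _ hf) subr_gt0.
by [].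
Qed.

Lemma posdef_top i (q : R) : val i = 0%N -> q ^+ 2 = gam i ^+ 2 ->
  posdef (hessian (Rlin Sigma lam L) (q *: u i)).
Proof.
move=> hi hq v hv; rewrite hess (qf_spec v (fun j => hess_u j hq)).
have [j hj] := ip_expand_neq0 hv.
have hpos' : forall k, 0 < lamH i k.
  move=> k; case: (eqVneq k i) => [->|hki]; first exact: lamH_ii.
  rewrite lamH_sign //; apply: hdist; rewrite hi lt0n.
  by apply: contra hki => /eqP h; apply/eqP/val_inj; rewrite /= h hi.
apply: (sum_pos (i := j)).
  by move=> k; apply: mulr_ge0; [exact: ltW | exact: sqr_ge0].
apply: mulr_gt0 => //.
by rewrite lt_def sqr_ge0 andbT sqrf_eq0.
Qed.

Lemma saddle_eigs i (q : R) : (0 < val i)%N -> q ^+ 2 = gam i ^+ 2 ->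
  (exists a, eigenvalue (hessian (Rlin Sigma lam L) (q *: u i)) a /\ 0 < a) /\
  (exists a, eigenvalue (hessian (Rlin Sigma lam L) (q *: u i)) a /\ a < 0).
Proof.
move=> hi hq; split.
  by exists (lamH i i); split; [exact: eig_of | exact: lamH_ii].
have h0 : (0 < d)%N by apply: ltn_trans hi (ltn_ord i).
pose j0 : 'I_d := Ordinal h0.
have hji : j0 != i by apply/eqP => h; move: hi; rewrite -h.
exists (lamH i j0); split; first exact: eig_of.
have hne : lamH i j0 != 0.
  rewrite /lamH (negbTE hji).
  have ht := tr_pos i; have hs := hpos i; have hsj := hpos j0; have hl := Lr_gt0.
  have hlam' := hlam; have hL1 := Lr_ge1.
  have hd : sigma i < sigma j0 := @hdist j0 i hi.
  rewrite !mulf_neq0 //; try (apply/lt0r_neq0; lra).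
  - by rewrite invr_neq0 //; apply/lt0r_neq0.
  - by rewrite subr_eq0 lt_eqF.
  - apply/lt0r_neq0.
    have : 0 <= (Lr - 1) * tt by apply: mulr_ge0; lra.
    have : 0 < (Lr + 1) * (Lr + 3) * sigma i by apply: mulr_gt0 => //; apply: mulr_gt0; lra.
    lra.
  - by rewrite invr_neq0 //; apply/lt0r_neq0; apply: Dpos; lra.
rewrite lt_neqAle hne /=; rewrite leNgt lamH_sign //.
by rewrite -leNgt; apply: ltW; apply: (@hdist j0 i hi).
Qed.

Lemma glob_min i (q : R) : val i = 0%N -> q ^+ 2 = gam i ^+ 2 ->
  global_min (Rlin Sigma lam L) (q *: u i).
Proof.
move=> hi hq x; rewrite !Rlin_Fab qf_mu qf2_mu hq gam2.
have hlam' := hlam; have hL1 := Lr_ge1.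
apply: (glob_scalar (tr_pos i) (hpos i) hlam' hL1 (a_ge0 x) (b_ge0 x)).
rewrite -subr_ge0 (qf_spec x heig) (qf_spec x heig2) mulr_sumr -sumrB.
apply: sumr_ge0 => j _.
have hs : sigma j <= sigma i.
  case: (eqVneq j i) => [->//|hji].
  apply: ltW; apply: hdist; rewrite hi lt0n.
  by apply: contra hji => /eqP h; apply/eqP/val_inj; rewrite /= h hi.
have := hpos j; have := sqr_ge0 (ip (u j) x).
set p := ip (u j) x ^+ 2 => hp hsj.
have -> : sigma i * (sigma j * p) - sigma j ^+ 2 * p = sigma j * p * (sigma i - sigma j) by ring.
by apply: mulr_ge0; [apply: mulr_ge0; lra | lra].
Qed.


Lemma main_sec :
  let f := Rlin Sigma lam L in
  let t := \tr Sigma in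
  let L' := (L%:R : R) in
  let gam i := Num.sqrt ((t + (L' + 1) * sigma i) /
                 (lam / L' * sigma i * (L' + 2) * (t + (L' + 3) * sigma i))) in
  let mu (s : bool) i := ((-1) ^+ s * gam i) *: u i in
  [/\ crit f = [set 0] `|` [set x | exists i s, x = mu s i],
      negdef (hessian f 0) /\ local_max f 0,
      (forall i s j, hessian f (mu s i) *m u j =
         (if j == i then 8 * (lam / L') * sigma i * (t + (L' + 1) * sigma i)
          else 2 * (lam / L') * sigma j * (sigma i - sigma j) *
               (((L' - 1) * t + (L' + 1) * (L' + 3) * sigma i) /
                (t + (L' + 3) * sigma i))) *: u j),
      (forall i s, val i = 0%N -> posdef (hessian f (mu s i))) /\
      (forall i s, (0 < val i)%N ->
         (exists a, eigenvalue (hessian f (mu s i)) a /\ 0 < a) /\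
         (exists a, eigenvalue (hessian f (mu s i)) a /\ a < 0))
    & (forall i s, val i = 0%N -> global_min f (mu s i)) /\
      (forall i s, (0 < val i)%N -> strict_saddle f (mu s i))].
Proof using hlam hL hsym hpd hdist hpos heig hunit.
move=> f t L' gam' mu.
have muE : forall s i, mu s i = ((-1) ^+ s * gam i) *: u i by [].
have fE : f = Rlin Sigma lam L by [].
rewrite fE; split.
- apply/seteqP; split => x /=.
    move/crit_inv => [->|[i [s ->]]]; first by left.
    by right; exists i, s; rewrite muE.
  case=> [->|[i [s ->]]]; first exact: crit_0.
  by rewrite muE; exact: crit_mu.
- by split; [exact: negdef0 | exact: localmax0].
- by move=> i s j; rewrite muE hess (hess_u _ (hq_sign i s)).
- split => i s hi; rewrite muE.
    exact: posdef_top hi (hq_sign i s).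
  exact: saddle_eigs hi (hq_sign i s).
- split => i s hi; rewrite muE.
    exact: glob_min hi (hq_sign i s).
  split; first exact: crit_mu.
  by have [_ h] := saddle_eigs hi (hq_sign i s).
Qed.

End Main.

Theorem proposition15 (R : realType) (d L : nat) (lam : R)
    (Sigma : 'M[R]_d) (sigma : 'I_d -> R) (u : 'I_d -> 'cV[R]_d) :
  0 < lam -> (1 <= L)%N ->
  Sigma^T = Sigma -> posdef Sigma ->
  (forall i j : 'I_d, (i < j)%N -> sigma j < sigma i) ->
  (forall i, 0 < sigma i) ->
  (forall i, Sigma *m u i = sigma i *: u i) ->
  (forall i, (u i)^T *m u i = 1) ->
  let f := Rlin Sigma lam L in
  let t := \tr Sigma in
  let L' := (L%:R : R) in
  let gam i := Num.sqrt ((t + (L' + 1) * sigma i) /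
                 (lam / L' * sigma i * (L' + 2) * (t + (L' + 3) * sigma i))) in
  let mu (s : bool) i := ((-1) ^+ s * gam i) *: u i in
  [/\ crit f = [set 0] `|` [set x | exists i s, x = mu s i],
      negdef (hessian f 0) /\ local_max f 0,
      (forall i s j, hessian f (mu s i) *m u j =
         (if j == i then 8 * (lam / L') * sigma i * (t + (L' + 1) * sigma i)
          else 2 * (lam / L') * sigma j * (sigma i - sigma j) *
               (((L' - 1) * t + (L' + 1) * (L' + 3) * sigma i) /
                (t + (L' + 3) * sigma i))) *: u j),
      (forall i s, val i = 0%N -> posdef (hessian f (mu s i))) /\
      (forall i s, (0 < val i)%N ->
         (exists a, eigenvalue (hessian f (mu s i)) a /\ 0 < a) /\
         (exists a, eigenvalue (hessian f (mu s i)) a /\ a < 0))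
    & (forall i s, val i = 0%N -> global_min f (mu s i)) /\
      (forall i s, (0 < val i)%N -> strict_saddle f (mu s i))].
Proof.
move=> hlam hL hsym hpd hdist hpos heig hunit.
exact: (main_sec hlam hL hsym hpd hdist hpos heig hunit).
Qed.
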